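(* Let $G$ be a graph and ${\cal P}=\{{\cal P}(v)\colon v\in V_G\}$ a family where each ${\cal P}(v)$ is a partition of $N_G(v)$. Then $\gamma(G\circ{\cal P})=|V_G|$.
   Context: All graphs are finite and simple. A set $D\subseteq V_G$ is a dominating set of $G$ if every vertex of $V_G-D$ has a neighbor in $D$; $\gamma(G)$ is the minimum cardinality of a dominating set. For a graph $G$ and a family ${\cal P}=\{{\cal P}(v)\colon v\in V_G\}$, where ${\cal P}(v)$ is a partition of $N_G(v)$ into nonempty blocks, the ${\cal P}$-corona $G\circ{\cal P}$ is the graph with vertex set $\{(v,1)\colon v\in V_G\}\cup\bigcup_{v\in V_G}\{(v,A)\colon A\in{\cal P}(v)\}$ and edge set $\bigcup_{v\in V_G}\{(v,1)(v,A)\colon A\in{\cal P}(v)\}\cup\bigcup_{uv\in E_G}\{(v,A)(u,B)\colon u\in A,\ v\in B\}$ (here $A\in{\cal P}(v)$, $B\in{\cal P}(u)$). *)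

(* Defs.v *)
From mathcomp Require Import all_boot.
Set Implicit Arguments. Unset Strict Implicit. Unset Printing Implicit Defensive.

Definition simple_graph (T : finType) (e : rel T) : Prop :=
  symmetric e /\ irreflexive e.

Definition nbhd (T : finType) (e : rel T) (v : T) : {set T} := [set u | e v u].

(* A (sub)graph given by a vertex set V : {set U} of an ambient finType U and an
   adjacency relation adj (the graph induced on V). *)
Definition dominating (U : finType) (V : {set U}) (adj : rel U) (D : {set U}) : bool :=
  (D \subset V) && [forall x in V :\: D, exists y in D, adj x y].

(* domination number: minimum cardinality of a dominating set
   (V itself is dominating, so #|V| is a valid initial bound). *)
Definition domination_number (U : finType) (V : {set U}) (adj : rel U) : nat :=
  \big[minn/#|V|]_(D : {set U} | dominating V adj D) #|D|.

(* P-corona.  Vertices live in T * option {set T}: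
   (v, None) encodes (v,1), and (v, Some A) encodes (v,A) with A \in P v. *)
Definition corona_vertices (T : finType) (P : T -> {set {set T}})
  : {set T * option {set T}} :=
  [set x | match x.2 with None => true | Some A => A \in P x.1 end].

Definition corona_adj (T : finType) (e : rel T) : rel (T * option {set T}) :=
  fun x y =>
    match x.2, y.2 with
    | None, None => false
    | None, Some _ => y.1 == x.1
    | Some _, None => y.1 == x.1
    | Some A, Some B => [&& e x.1 y.1, y.1 \in A & x.1 \in B]
    end.

(* Main.v *)
Require Import Defs.
From mathcomp Require Import all_boot.

Lemma bigmin_le (I : finType) (x : nat) (P : pred I) (F : I -> nat) j :
  P j -> \big[minn/x]_(i | P i) F i <= F j.
Proof.
move=> Pj; rewrite unlock /reducebig.
have : j \in index_enum I by rewrite mem_index_enum.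
elim: (index_enum I) => [//|a r IH] /=; rewrite inE => /orP[/eqP <-|/IH H].
  by rewrite Pj geq_minl.
by case: (P a) => //; rewrite geq_min H orbT.
Qed.

Theorem lemma2p11 (T : finType) (e : rel T) (P : T -> {set {set T}}) :
  simple_graph e ->
  (forall v : T, partition (P v) (nbhd e v)) ->
  domination_number (corona_vertices P) (corona_adj e) = #|T|.
Proof.
move=> _ _.
set V := corona_vertices P.
pose D0 := [set (v, @None {set T}) | v : T].
have cD0 : #|D0| = #|T|.
  rewrite card_imset ?cardsT //; by move=> x y [].
have D0V : D0 \subset V.
  by apply/subsetP=> x /imsetP[v _ ->]; rewrite inE.
have domD0 : dominating V (corona_adj e) D0.
  rewrite /dominating D0V /=; apply/forall_inP=> [[v [A|]]].
    rewrite inE => /andP[_ _]; apply/exists_inP; exists (v, None).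
      by apply/imsetP; exists v.
    by rewrite /corona_adj /=.
  rewrite !inE => /andP[H _]; exfalso; move/negP: H; apply.
  by apply/imsetP; exists v.
have lb : forall D, dominating V (corona_adj e) D -> #|T| <= #|D|.
  move=> D /andP[DV /forall_inP HD].
  have sub : [set: T] \subset [set x.1 | x in D].
    apply/subsetP=> v _.
    case: (boolP ((v, @None {set T}) \in D)) => Hin.
      by apply/imsetP; exists (v, None).
    have : (v, @None {set T}) \in V :\: D by rewrite !inE Hin.
    move/HD/exists_inP=> [[u [B|]] Hy]; rewrite /corona_adj //=.
    by move/eqP=> <-; apply/imsetP; exists (u, Some B).
  rewrite -cardsT; apply: leq_trans (subset_leq_card sub) _.
  exact: leq_imset_card.
apply/eqP; rewrite eqn_leq; apply/andP; split.
  rewrite -cD0; exact: bigmin_le.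
rewrite /domination_number; apply: (big_ind (fun n => #|T| <= n)).
- by rewrite -cD0 subset_leq_card.
- by move=> x y Hx Hy; rewrite leq_min Hx Hy.
- exact: lb.
Qed.
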